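(* Assume $\mu>0$, $0<\lambda<\infty$, $\tau>0$, and let $\widetilde{\mathbf S'}=\frac1\lambda\mathbf M+\mathbf M(\tau\mathbf M+2\mu\mathbf N)^{-1}\mathbf N$. Then $\widetilde{\mathbf S'}$ is invertible and $$\widetilde{\mathbf S'}^{-1}=\frac{2\mu\lambda}{2\mu+\lambda}\mathbf M^{-1}+\tau\Big(\frac{\lambda}{2\mu+\lambda}\Big)^2\Big(\frac{\tau}{2\mu+\lambda}\mathbf M+\mathbf N\Big)^{-1}.$$
   Context: $\mathcal T_h$ is a conforming simplicial triangulation of a polygonal/polyhedral domain $\Omega\subset\mathbb R^d$ with mesh size $h$ and facet set $\mathcal E_h$; $\overline Q_h$ is the space of piecewise constant functions on $\mathcal T_h$ with a fixed basis, $\overline{\mathbf P}$ denoting the coefficient vector of $\overline p_h$ and $\langle\cdot,\cdot\rangle_2$ the Euclidean product. For $\overline q\in\overline Q_h$, $[\![\overline q]\!]$ is the jump across interior facets and $0$ on boundary facets. $\mathbf M$ and $\mathbf N$ are defined by $\langle\mathbf M\overline{\mathbf P},\overline{\mathbf Q}\rangle_2=(\overline p_h,\overline q_h)_{L^2(\Omega)}$ and $\langle\mathbf N\overline{\mathbf P},\overline{\mathbf Q}\rangle_2=\frac1h\sum_{F\in\mathcal E_h}\langle[\![\overline p_h]\!],[\![\overline q_h]\!]\rangle_{L^2(F)}$ for all $\overline p_h,\overline q_h\in\overline Q_h$. *)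

(* Defs.v *)
From HB Require Import structures.
From mathcomp Require Import all_boot all_order all_algebra.
Set Implicit Arguments. Unset Strict Implicit. Unset Printing Implicit Defensive.
Import Order.TTheory GRing.Theory Num.Theory.
Local Open Scope ring_scope.

(* Abstract combinatorial data of a mesh, sufficient to define Qbar_h, M, N.
   - elements of T_h: indices 'I_n, with volumes vol T = |T|;
   - facets E_h: a finite type E; each facet F has a first neighbouring
     element and an optional second one (None = boundary facet), and a
     measure meas F = |F|.
   - a piecewise constant function is given by its values on elements
     ('I_n -> R); the fixed basis of Qbar_h is given by an invertible matrix
     B whose column i holds the element values of the i-th basis function. *)

Section MeshForms.
Variables (R : realFieldType) (n : nat) (E : finType).
Variables (vol : 'I_n -> R) (nbr : E -> 'I_n * option 'I_n) (meas : E -> R).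

Definition l2pc (p q : 'I_n -> R) : R := \sum_(T < n) vol T * p T * q T.

Definition jump_pc (p : 'I_n -> R) (F : E) : R :=
  match nbr F with
  | (T1, Some T2) => p T1 - p T2
  | (_, None) => 0
  end.

Definition jumpform (h : R) (p q : 'I_n -> R) : R :=
  h^-1 * \sum_(F : E) meas F * jump_pc p F * jump_pc q F.

Definition basisfun (B : 'M[R]_n) (i : 'I_n) : 'I_n -> R := fun T => B T i.

(* <M P, Q>_2 = (p_h, q_h):  (M P)_i = sum_j M_ij P_j, tested with basis i *)
Definition massM (B : 'M[R]_n) : 'M[R]_n :=
  \matrix_(i, j) l2pc (basisfun B j) (basisfun B i).

Definition jumpN (h : R) (B : 'M[R]_n) : 'M[R]_n :=
  \matrix_(i, j) jumpform h (basisfun B j) (basisfun B i).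

End MeshForms.

(* Main.v *)
Require Import Defs.
From HB Require Import structures.
From mathcomp Require Import all_boot all_order all_algebra ring.
Import Order.TTheory GRing.Theory Num.Theory.
Local Open Scope ring_scope.

Lemma quadE (R : realFieldType) n (I : finType) (c : I -> R) (a : I -> 'I_n -> R) (v : 'rV[R]_n) :
  (v *m (\matrix_(i, j) \sum_k c k * a k j * a k i) *m v^T) 0 0
  = \sum_k c k * (\sum_i v 0 i * a k i) ^+ 2.
Proof.
rewrite mxE.
under eq_bigr => j _ do rewrite !mxE mulr_suml.
under eq_bigr => j _ do under eq_bigr => i _ do rewrite !mxE mulr_sumr mulr_suml.
under [RHS]eq_bigr => k _ do rewrite expr2 mulr_suml mulr_sumr.
under [RHS]eq_bigr => k _ do under eq_bigr => i _ do rewrite mulr_sumr mulr_sumr.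
rewrite exchange_big [RHS]exchange_big /=; apply: eq_bigr => i _.
rewrite exchange_big /=; apply: eq_bigr => k _.
by apply: eq_bigr => j _; ring.
Qed.

Lemma unit_of_pos (R : realFieldType) n (A : 'M[R]_n) :
  (forall v : 'rV_n, v != 0 -> 0 < (v *m A *m v^T) 0 0) -> A \in unitmx.
Proof.
move=> H; rewrite unitmxE unitfE; apply/negP => /det0P [v nz vA0].
by have := H v nz; rewrite vA0 mul0mx mxE ltxx.
Qed.

Lemma quad_comb (R : realFieldType) n (A B : 'M[R]_n) c d (v : 'rV_n) :
  (v *m (c *: A + d *: B) *m v^T) 0 0 =
  c * (v *m A *m v^T) 0 0 + d * (v *m B *m v^T) 0 0.
Proof.
by rewrite mulmxDr mulmxDl -!scalemxAr -!scalemxAl !mxE.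
Qed.

Theorem theorem3p11 (R : realFieldType) (n : nat) (E : finType)
  (vol : 'I_n -> R) (nbr : E -> 'I_n * option 'I_n) (meas : E -> R)
  (h : R) (B : 'M[R]_n) (mu lambda tau : R) :
  (forall T, 0 < vol T) ->
  (forall F, 0 < meas F) ->
  (forall F T1 T2, nbr F = (T1, Some T2) -> T1 != T2) ->
  0 < h ->
  B \in unitmx ->
  0 < mu -> 0 < lambda -> 0 < tau ->
  let M := massM vol B in
  let N := jumpN nbr meas h B in
  let S := lambda^-1 *: M + M *m invmx (tau *: M + (2 * mu) *: N) *m N in
  S \in unitmx /\
  invmx S = (2 * mu * lambda / (2 * mu + lambda)) *: invmx M
            + (tau * (lambda / (2 * mu + lambda)) ^+ 2)
              *: invmx ((tau / (2 * mu + lambda)) *: M + N).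
Proof.
move=> Hvol Hmeas _ Hh HB Hmu Hla Hta M N S.
have qM : forall v : 'rV_n, v != 0 -> 0 < (v *m M *m v^T) 0 0.
  move=> v nz.
  have -> : (v *m M *m v^T) 0 0 = \sum_k vol k * (\sum_i v 0 i * B k i) ^+ 2
    by exact: quadE.
  have [k wk] : exists k, (v *m B^T) 0 k != 0.
    case: (pickP (fun k => (v *m B^T) 0 k != 0)) => [k wk | H0]; first by exists k.
    have e0 : v *m B^T = 0.
      apply/matrixP => i j; rewrite (ord1 i) [RHS]mxE; apply/eqP.
      by have := H0 j; rewrite /= => /negbFE.
    by move: nz; rewrite -(mulmxK (x:=B^T) _ v) ?unitmx_tr // e0 mul0mx eqxx.
  rewrite (bigD1 k) //=; apply: ltr_wpDr.
    by apply: sumr_ge0 => i _; rewrite mulr_ge0 ?sqr_ge0 ?ltW.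
  apply: mulr_gt0 => //; rewrite exprn_even_gt0 //.
  move: wk; rewrite mxE; congr (_ != _); apply: eq_bigr => i _; rewrite mxE.
  done.
have qN : forall v : 'rV_n, 0 <= (v *m N *m v^T) 0 0.
  move=> v.
  have -> : N = \matrix_(i, j) \sum_F (h^-1 * meas F) * jump_pc nbr (basisfun B j) F
                                          * jump_pc nbr (basisfun B i) F.
    apply/matrixP => i j; rewrite !mxE /jumpform mulr_sumr.
    by apply: eq_bigr => F _; rewrite !mulrA.
  rewrite quadE; apply: sumr_ge0 => F _.
  by rewrite mulr_ge0 ?sqr_ge0 // mulr_ge0 ?invr_ge0 ?ltW.
have posU : forall c d, 0 < c -> 0 <= d -> c *: M + d *: N \in unitmx.
  move=> c d hc hd; apply: unit_of_pos => v nz; rewrite quad_comb.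
  by apply: ltr_wpDr; [rewrite mulr_ge0 | rewrite mulr_gt0 // qM].
have HM : M \in unitmx.
  by have := posU 1 0 ltr01 (lexx _); rewrite scale1r scale0r addr0.
set P := tau *: M + (2 * mu) *: N.
set c := tau / (2 * mu + lambda).
set Q := c *: M + N.
have hs : 0 < 2 * mu + lambda by rewrite addr_gt0 // mulr_gt0.
have HP : P \in unitmx by apply: posU => //; rewrite mulr_ge0 // ltW.
have HQ : Q \in unitmx.
  by have := posU c 1 (divr_gt0 Hta hs) ler01; rewrite scale1r.
have la0 : lambda != 0 by rewrite gt_eqF.
have s0 : 2 * mu + lambda != 0 by rewrite gt_eqF.
set a := (2 * mu + lambda) / lambda.
have a0 : a != 0 by rewrite mulf_neq0 // invr_eq0.
have eS : S = M *m invmx P *m (a *: Q).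
  have -> : a *: Q = lambda^-1 *: P + N.
    apply/matrixP => i j; rewrite !mxE /a /c; field; rewrite s0 la0 //.
  by rewrite mulmxDr -scalemxAr mulmxKV.
set X := a^-1 *: (invmx Q *m P *m invmx M).
have SX : S *m X = 1%:M.
  rewrite eS -!scalemxAr -?scalemxAl ?scalerA ?mulVf ?mulfV // scale1r.
  rewrite -!mulmxA (mulmxA Q) mulmxV // mul1mx (mulmxA (invmx P)) mulVmx // mul1mx.
  by rewrite ?mulmxA mulmxV.
have [SU _] := mulmx1_unit SX.
split => //.
have -> : invmx S = X by rewrite -[X]mul1mx -(mulVmx SU) -mulmxA SX mulmx1.
have eP : P = (2 * mu) *: Q + (tau * lambda / (2 * mu + lambda)) *: M.
  apply/matrixP => i j; rewrite !mxE /c; field; rewrite s0 //.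
rewrite /X eP mulmxDr mulmxDl -!scalemxAr -!scalemxAl mulVmx // mul1mx mulmxK //.
rewrite scalerDr !scalerA; congr (_ *: _ + _ *: _); rewrite /a; field;
  rewrite ?s0 ?la0 //.
Qed.
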